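(* Let $\mathfrak{n}$ be a Heisenberg Lie algebra over $K$ of dimension $n\ge5$. Then every LR-structure on $\mathfrak{n}$ is complete, i.e. all its left multiplication operators are nilpotent.
   Context: $K$ is a field of characteristic zero. An LR-structure on a Lie algebra $\mathfrak{n}=(V,\{\,,\})$ is a bilinear product $x*y$ on $V$ such that for all $x,y,z\in V$: $x*y-y*x=\{x,y\}$, $x*(y*z)=y*(x*z)$, and $x*\{y,z\}=\{x*y,z\}+\{y,x*z\}$. It is complete if all left multiplications $y\mapsto x*y$ are nilpotent. The Heisenberg Lie algebra of dimension $2m+1$ has a basis $e_1,\dots,e_m,f_1,\dots,f_m,z$ with nonzero brackets $\{e_i,f_i\}=z$. *)

(* Defs.v *)
From HB Require Import structures.
From mathcomp Require Import all_boot all_order all_algebra.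
Set Implicit Arguments. Unset Strict Implicit. Unset Printing Implicit Defensive.
Import GRing.Theory.
Local Open Scope ring_scope.

(* The Heisenberg Lie algebra of dimension 2m+1, realised on row vectors
   'rV[K]_(m.*2.+1) with coordinates indexed by 'I_(m.*2.+1):
   index i < m      <-> e_(i+1),
   index m + i      <-> f_(i+1)   (i < m),
   index 2m (ord_max) <-> z. *)
Definition heis_e (m : nat) (i : nat) : 'I_(m.*2.+1) := inord i.
Definition heis_f (m : nat) (i : nat) : 'I_(m.*2.+1) := inord (m + i).
Definition heis_z (m : nat) : 'I_(m.*2.+1) := ord_max.

(* {x,y} = (sum_i (x_{e_i} y_{f_i} - x_{f_i} y_{e_i})) z, i.e. the bilinear
   bracket with only nonzero brackets {e_i,f_i} = z = -{f_i,e_i}. *)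
Definition heis_bracket (K : fieldType) (m : nat)
  (x y : 'rV[K]_(m.*2.+1)) : 'rV[K]_(m.*2.+1) :=
  (\sum_(i < m) (x 0 (heis_e m i) * y 0 (heis_f m i)
                 - x 0 (heis_f m i) * y 0 (heis_e m i)))
    *: delta_mx 0 (heis_z m).

Definition bilinear_product (K : fieldType) (V : lmodType K)
  (p : V -> V -> V) : Prop :=
  (forall (a : K) (x y z : V), p (a *: x + y) z = a *: p x z + p y z) /\
  (forall (a : K) (x y z : V), p x (a *: y + z) = a *: p x y + p x z).

Definition LR_structure (K : fieldType) (V : lmodType K)
  (br : V -> V -> V) (p : V -> V -> V) : Prop :=
  [/\ bilinear_product p,
      (forall x y : V, p x y - p y x = br x y),
      (forall x y z : V, p x (p y z) = p y (p x z)) &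
      (forall x y z : V, p x (br y z) = br (p x y) z + br y (p x z))].

Definition complete_product (K : fieldType) (V : lmodType K)
  (p : V -> V -> V) : Prop :=
  forall x : V, exists k : nat, forall y : V, iter k (p x) y = 0.

(* Main.v *)
Require Import Defs.
From HB Require Import structures.
From mathcomp Require Import all_boot all_order all_algebra.
From mathcomp Require Import ring zify.
Import GRing.Theory.
Local Open Scope ring_scope.

Section H.
Variables (K : fieldType) (m : nat).
Local Notation V := 'rV[K]_(m.*2.+1).

Definition hb (x y : V) : K :=
  \sum_(i < m) (x 0 (heis_e m i) * y 0 (heis_f m i)
                 - x 0 (heis_f m i) * y 0 (heis_e m i)).

Lemma hbE x y : heis_bracket x y = hb x y *: delta_mx 0 (heis_z m).
Proof. by []. Qed.

Lemma val_e (i : 'I_m) : val (heis_e m i) = i.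
Proof. rewrite /heis_e /= inordK //; have := ltn_ord i; rewrite -addnn; lia. Qed.
Lemma val_f (i : 'I_m) : val (heis_f m i) = (m + i)%N.
Proof. rewrite /heis_f /= inordK //; have := ltn_ord i; rewrite -addnn; lia. Qed.
Lemma val_z : val (heis_z m) = m.*2.
Proof. by []. Qed.

Lemma dE (a b : 'I_(m.*2.+1)) : (delta_mx 0 a : V) 0 b = (a == b)%:R.
Proof. by rewrite mxE eqxx eq_sym. Qed.

Lemma hb_antisym x y : hb x y = - hb y x.
Proof. rewrite /hb -sumrN; apply: eq_bigr => i _. rewrite opprB; congr (_ - _); exact: mulrC. Qed.

Lemma hb_linl a x y w : hb (a *: x + y) w = a * hb x w + hb y w.
Proof.
rewrite /hb mulr_sumr -big_split; apply: eq_bigr => i _; rewrite !mxE /=; ring.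
Qed.

Lemma hb_linr a x y w : hb w (a *: x + y) = a * hb w x + hb w y.
Proof. by rewrite hb_antisym hb_linl (hb_antisym x) (hb_antisym y); ring. Qed.

Lemma hb_e (k : 'I_m) v : hb (delta_mx 0 (heis_e m k)) v = v 0 (heis_f m k).
Proof.
rewrite /hb (bigD1 k) //= !dE eqxx.
have -> : (heis_e m k == heis_f m k) = false.
  by apply/negbTE/negP => /eqP/(congr1 val); rewrite val_e val_f; have := ltn_ord k; lia.
rewrite big1 ?addr0; first by rewrite mul1r mul0r subr0.
move=> i ik; rewrite !dE.
have -> : (heis_e m k == heis_e m i) = false.
  apply/negbTE/negP => /eqP/(congr1 val); rewrite !val_e => /val_inj E.
  by move: ik; rewrite E eqxx.
have -> : (heis_e m k == heis_f m i) = false.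
  by apply/negbTE/negP => /eqP/(congr1 val); rewrite val_e val_f; have := ltn_ord k; lia.
by rewrite !mul0r subr0.
Qed.

Lemma hb_f (k : 'I_m) v : hb (delta_mx 0 (heis_f m k)) v = - v 0 (heis_e m k).
Proof.
rewrite /hb (bigD1 k) //= !dE eqxx.
have -> : (heis_f m k == heis_e m k) = false.
  by apply/negbTE/negP => /eqP/(congr1 val); rewrite val_e val_f; have := ltn_ord k; lia.
rewrite big1 ?addr0; first by rewrite mul1r mul0r sub0r.
move=> i ik; rewrite !dE.
have -> : (heis_f m k == heis_f m i) = false.
  apply/negbTE/negP => /eqP/(congr1 val); rewrite !val_f => E.
  have /val_inj E' : (k : nat) = i by lia.
  by move: ik; rewrite E' eqxx.
have -> : (heis_f m k == heis_e m i) = false.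
  by apply/negbTE/negP => /eqP/(congr1 val); rewrite val_e val_f; have := ltn_ord i; lia.
by rewrite !mul0r subr0.
Qed.

Lemma hb_z v : hb (delta_mx 0 (heis_z m)) v = 0.
Proof.
rewrite /hb big1 // => i _; rewrite !dE.
have -> : (heis_z m == heis_e m i) = false.
  by apply/negbTE/negP => /eqP/(congr1 val); rewrite val_e val_z; have := ltn_ord i; rewrite -addnn; lia.
have -> : (heis_z m == heis_f m i) = false.
  by apply/negbTE/negP => /eqP/(congr1 val); rewrite val_f val_z; have := ltn_ord i; rewrite -addnn; lia.
by rewrite !mul0r subr0.
Qed.

Lemma radical (w : V) :
  (forall u, hb u w = 0) -> w = w 0 (heis_z m) *: delta_mx 0 (heis_z m).
Proof.
move=> H; apply/rowP => j; rewrite !mxE eqxx /=.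
case: (eqVneq (heis_z m) j) => [<-|nj]; first by rewrite mulr1.
rewrite mulr0.
have jlt : (j < m.*2)%N.
  have := ltn_ord j; move: nj; rewrite eq_sym => /negP nj.
  rewrite ltnS leq_eqVlt => /orP[/eqP E|//]; exfalso; apply: nj.
  by apply/eqP/val_inj; rewrite /= E.
case: (ltnP j m) => jm.
  have := H (delta_mx 0 (heis_f m (Ordinal jm))); rewrite hb_f => /eqP.
  rewrite oppr_eq0 => /eqP <-; congr (w 0 _); apply/val_inj; by rewrite val_e.
have jm' : (j - m < m)%N by move: jlt; move: (j : nat) => jj; rewrite -addnn; lia.
have := H (delta_mx 0 (heis_e m (Ordinal jm'))); rewrite hb_e => <-.
congr (w 0 _); apply/val_inj; rewrite val_f /=; lia.
Qed.

Lemma lin0 (f : V -> K) : (forall a x y, f (a *: x + y) = a * f x + f y) ->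
  (forall j, f (delta_mx 0 j) = 0) -> forall x, f x = 0.
Proof.
move=> L D x; rewrite (row_sum_delta x).
have f0 : f 0 = 0.
  by have := L 1 0 0; rewrite scaler0 addr0 mul1r => E; apply: (@addrI _ (f 0)); rewrite addr0 -E.
apply: (big_ind (fun v => f v = 0)) => //.
  by move=> a b Ha Hb; rewrite -[a]scale1r L Ha Hb mulr0 addr0.
by move=> j _; rewrite -[_ *: _]addr0 L f0 D mulr0 addr0.
Qed.

Local Notation Z := (delta_mx 0 (heis_z m) : V).

Lemma scZ_inj (c d : K) : c *: Z = d *: Z -> c = d.
Proof. by move/(congr1 (fun w : V => w 0 (heis_z m))); rewrite !mxE !eqxx /= !mulr1. Qed.

Lemma hbZ (w v : V) c : hb (w + c *: Z) v = hb w v.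
Proof. by rewrite addrC hb_linl hb_z mulr0 add0r. Qed.

Lemma main (hK : [pchar K] =i pred0) (hm : (2 <= m)%N) (p : V -> V -> V) :
  LR_structure (@heis_bracket K m) p -> complete_product p.
Proof.
case=> [[Bl Br] H2 H3 H4].
have pr0 x : p x 0 = 0.
  have := Br 1 x 0 0; rewrite scaler0 addr0 scale1r => E.
  by apply: (@addrI _ (p x 0)); rewrite addr0 -E.
have prZ x c v : p x (c *: v) = c *: p x v by rewrite -[c *: v]addr0 Br pr0 addr0.
have m0 : (0 < m)%N by lia.
pose i0 : 'I_m := Ordinal m0.
pose E0 : V := delta_mx 0 (heis_e m i0).
pose F0 : V := delta_mx 0 (heis_f m i0).
have hbEF : hb E0 F0 = 1 by rewrite hb_e dE eqxx.
pose lam x := hb (p x E0) F0 + hb E0 (p x F0).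
have pZ x : p x Z = lam x *: Z.
  have := H4 x E0 F0; rewrite !hbE hbEF scale1r -scalerDl.
  by rewrite /lam.
have D x u v : hb (p x u) v + hb u (p x v) = lam x * hb u v.
  have := H4 x u v; rewrite !hbE prZ pZ scalerA -scalerDl => /scZ_inj.
  by rewrite mulrC.
have S x u v : hb (p x u) v = hb (p u x) v.
  have := H2 x u; rewrite hbE => /eqP; rewrite subr_eq => /eqP ->.
  by rewrite addrC hbZ.
have Cyc x u v : lam x * hb u v + lam u * hb v x + lam v * hb x u = 0.
  rewrite -D -D -D (hb_antisym u) (hb_antisym v (p u x)) (hb_antisym x (p v u)).
  rewrite (S u x v) (S v u x) (S x v u).
  by set a := hb (p x u) v; set b := hb (p u v) x; set c := hb (p v x) u; ring.
have lamL a x y : lam (a *: x + y) = a * lam x + lam y.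
  by rewrite /lam !Bl !hb_linl !hb_linr; ring.
have lamB j : lam (delta_mx 0 j) = 0.
  have k1 : ((if ((j : nat) == 0%N) || ((j : nat) == m) then 1 else 0) < m)%N.
    by case: ifP => _; lia.
  pose k : 'I_m := Ordinal k1.
  have := Cyc (delta_mx 0 j) (delta_mx 0 (heis_e m k)) (delta_mx 0 (heis_f m k)).
  rewrite hb_e hb_f hb_antisym hb_e !dE eqxx.
  have -> : (j == heis_e m k) = false.
    apply/negbTE/negP => /eqP/(congr1 val); rewrite val_e /=.
    by move: (j : nat) => jj; case: ifP => /orP; lia.
  have -> : (j == heis_f m k) = false.
    apply/negbTE/negP => /eqP/(congr1 val); rewrite val_f /=.
    by move: (j : nat) => jj; case: ifP => /orP; lia.
  by rewrite oppr0 !mulr0 !addr0 mulr1.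
have lam0 : forall x, lam x = 0 by apply: lin0.
have pZ0 x : p x Z = 0 by rewrite pZ lam0 scale0r.
have sp x u v : hb (p x u) v = - hb u (p x v).
  by apply/eqP; rewrite -subr_eq0 opprK D lam0 mul0r.
have c2 x u v : hb (p x (p x u)) v = hb (p (p x x) u) v.
  have := H2 x u; rewrite hbE => /eqP; rewrite subr_eq => /eqP ->.
  rewrite Br pZ0 scaler0 add0r H3.
  have := H2 u (p x x); rewrite hbE => /eqP; rewrite subr_eq => /eqP ->.
  by rewrite addrC hbZ.
have two : (2%:R : K) != 0.
  by move/pcharf0P: hK => ->.
have T2 x u v : hb u (p x (p x v)) = 0.
  have r1 : hb u (p x (p x v)) = hb (p x (p x u)) v.
    by rewrite [RHS]sp sp opprK.
  have r2 : hb (p x (p x u)) v = - hb u (p x (p x v)).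
    rewrite c2 sp; congr (- _).
    by rewrite hb_antisym -c2 hb_antisym opprK.
  have : hb u (p x (p x v)) * 2%:R = 0.
    by rewrite mulr_natr mulr2n {2}r1 r2 subrr.
  by move/eqP; rewrite mulf_eq0 (negbTE two) orbF => /eqP.
move=> x; exists 3%N => y /=.
rewrite (radical _ (fun u => T2 x u y)) prZ pZ0 scaler0 //.
Qed.

End H.

Theorem corollary4p12 (K : fieldType) (m : nat)
  (hK : [pchar K] =i pred0) (hm : (2 <= m)%N)
  (p : 'rV[K]_(m.*2.+1) -> 'rV[K]_(m.*2.+1) -> 'rV[K]_(m.*2.+1)) :
  LR_structure (@heis_bracket K m) p -> complete_product p.
Proof. exact: main. Qed.
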